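(* Let $n\ge2$ be an integer and let $A_1,\dots,A_{2n}$ be (not necessarily distinct) points in $\mathbb{R}^m$; set $A_{2n+1}=A_1$. Let $G_1$ be the centroid of $A_1,A_3,\dots,A_{2n-1}$ and $G_2$ the centroid of $A_2,A_4,\dots,A_{2n}$. Then $$\sum_{i=1}^{2n}|A_iA_{i+1}|^2=\sum_{\substack{1\le i<j\le 2n\\ 1<j-i<2n-1}}(-1)^{j-i}|A_iA_j|^2$$ holds if and only if $G_1=G_2$.
   Context: $|XY|$ denotes the Euclidean distance in $\mathbb{R}^m$; the centroid of points $B_1,\dots,B_r$ is the point with position vector $\frac1r\sum_k B_k$. *)

(* Defs.v *)
From HB Require Import structures.
From mathcomp Require Import all_boot all_order all_algebra.
From mathcomp Require Import all_reals.
Set Implicit Arguments. Unset Strict Implicit. Unset Printing Implicit Defensive.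
Import Order.TTheory GRing.Theory Num.Theory.
Local Open Scope ring_scope.

Definition dist2 (R : realType) (m : nat) (X Y : 'rV[R]_m) : R :=
  \sum_(k < m) (X 0 k - Y 0 k) ^+ 2.

Definition centroid (R : realType) (m r : nat) (B : nat -> 'rV[R]_m) : 'rV[R]_m :=
  (r%:R)^-1 *: \sum_(k < r) B k.

(* Main.v *)
Require Import Defs.
From HB Require Import structures.
From mathcomp Require Import all_boot all_order all_algebra.
From mathcomp Require Import all_reals.
From mathcomp Require Import zify ring lra.
Import Order.TTheory GRing.Theory Num.Theory.
Local Open Scope ring_scope.

Section S.
Variable R : realType.

Lemma sgn_sub (i j : nat) : (i <= j)%N ->
  (-1) ^+ (j - i) = (-1) ^+ i * (-1) ^+ j :> R.
Proof.
move=> hij; rewrite -{2}(subnKC hij) exprD mulrA -exprD.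
have -> : (-1) ^+ (i + i) = 1 :> R by rewrite -signr_odd addnn odd_double.
by rewrite mul1r.
Qed.

Lemma scalarF (x : nat -> R) (N : nat) :
  \sum_(1 <= i < N.+1) \sum_(i.+1 <= j < N.+1) (-1) ^+ (j - i) * (x i - x j) ^+ 2
  = (\sum_(1 <= i < N.+1) (-1) ^+ i) * (\sum_(1 <= i < N.+1) (-1) ^+ i * x i ^+ 2)
    - (\sum_(1 <= i < N.+1) (-1) ^+ i * x i) ^+ 2.
Proof.
elim: N => [|N IH].
  by rewrite !big_geq // mul0r expr0n subrr.
rewrite big_nat_recr //= (@big_geq _ _ _ N.+2 N.+2) // addr0.
rewrite (eq_big_nat _ _ (F2 := fun i => \sum_(i.+1 <= j < N.+1)
   (-1) ^+ (j - i) * (x i - x j) ^+ 2 + (-1) ^+ (N.+1 - i) * (x i - x N.+1) ^+ 2)); last first.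
  by move=> i /andP[_ hi]; rewrite big_nat_recr.
rewrite big_split /= IH.
rewrite (eq_big_nat _ _ (F1 := fun i => (-1) ^+ (N.+1 - i) * (x i - x N.+1) ^+ 2) (F2 := fun i => (-1) ^+ N.+1 * ((-1) ^+ i * x i ^+ 2)
   - (-1) ^+ N.+1 * 2 * x N.+1 * ((-1) ^+ i * x i) + (-1) ^+ N.+1 * x N.+1 ^+ 2 * (-1) ^+ i)); last first.
  move=> i /andP[_ hi]; rewrite sgn_sub; last by lia.
  ring.
rewrite !big_split /= sumrN -!mulr_sumr.
rewrite !(big_nat_recr N.+1 1) //=.
set e := (-1) ^+ N.+1 : R.
have : e = 1 \/ e = -1 by rewrite /e -signr_odd; case: (odd _); [right|left].
by case=> ->; ring.
Qed.

Lemma altsum (f : nat -> R) (n : nat) :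
  \sum_(1 <= i < (2 * n).+1) (-1) ^+ i * f i = \sum_(t < n) (f (2 * t).+2 - f (2 * t).+1).
Proof.
elim: n => [|n IH]; first by rewrite big_geq // big_ord0.
have -> : (2 * n.+1).+1 = (2 * n).+3 by lia.
rewrite big_nat_recr; last by lia.
rewrite big_nat_recr; last by lia.
rewrite /= IH big_ord_recr /=.
have -> : (-1) ^+ (2 * n).+1 = -1 :> R by rewrite -signr_odd /= mul2n odd_double.
have -> : (-1) ^+ (2 * n).+2 = 1 :> R by rewrite -signr_odd /= mul2n odd_double.
rewrite -addrA; congr (_ + _); ring.
Qed.

Lemma vecF (m : nat) (A : nat -> 'rV[R]_m) (N : nat) :
  \sum_(1 <= i < N.+1) \sum_(i.+1 <= j < N.+1) (-1) ^+ (j - i) * dist2 (A i) (A j)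
  = \sum_(k < m) ((\sum_(1 <= i < N.+1) (-1) ^+ i) * (\sum_(1 <= i < N.+1) (-1) ^+ i * A i 0 k ^+ 2)
    - (\sum_(1 <= i < N.+1) (-1) ^+ i * A i 0 k) ^+ 2).
Proof.
under eq_bigr do under eq_bigr do rewrite /dist2 mulr_sumr.
under eq_bigr do rewrite exchange_big /=.
rewrite exchange_big /=.
apply: eq_bigr => k _.
by rewrite -(scalarF (fun i => A i 0 k)).
Qed.

Lemma dist2C (m : nat) (X Y : 'rV[R]_m) : dist2 X Y = dist2 Y X.
Proof. by apply: eq_bigr => k _; rewrite -sqrrN opprB. Qed.

Lemma filt_true (a b : nat) (P : pred nat) (F : nat -> R) :
  (forall j, (a <= j < b)%N -> P j) ->
  \sum_(a <= j < b | P j) F j = \sum_(a <= j < b) F j.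
Proof. by move=> h; rewrite big_mkcond; apply: eq_big_nat => j /h ->. Qed.

Lemma stepA (m n : nat) (hn : (2 <= n)%N) (A : nat -> 'rV[R]_m) :
  \sum_(1 <= i < (2 * n).+1)
       \sum_(i.+1 <= j < (2 * n).+1 | (1 < j - i)%N && (j - i < 2 * n - 1)%N)
         ((-1) ^+ (j - i) * dist2 (A i) (A j))
  = \sum_(1 <= i < (2 * n).+1) \sum_(i.+1 <= j < (2 * n).+1)
         ((-1) ^+ (j - i) * dist2 (A i) (A j))
    + (\sum_(1 <= i < 2 * n) dist2 (A i) (A i.+1) + dist2 (A (2 * n)%N) (A 1%N)).
Proof.
have hodd : (-1) ^+ (2 * n - 1) = -1 :> R.
  have -> : (2 * n - 1 = (2 * (n - 1)).+1)%N by lia.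
  by rewrite -signr_odd /= mul2n odd_double.
set N := (2 * n)%N in hodd *.
have hN : (4 <= N)%N by rewrite /N; lia.
pose G i := \sum_(i.+1 <= j < N.+1 | (1 < j - i)%N && (j - i < N - 1)%N)
         ((-1) ^+ (j - i) * dist2 (A i) (A j)).
pose H i := \sum_(i.+1 <= j < N.+1) ((-1) ^+ (j - i) * dist2 (A i) (A j)).
have split3 (F : nat -> R) : \sum_(1 <= i < N.+1) F i = F 1%N + \sum_(2 <= i < N) F i + F N.
  rewrite big_ltn; last by lia.
  by rewrite big_nat_recr /= ?addrA //; lia.
rewrite (split3 G) (split3 H).
rewrite (big_ltn (m := 1%N) (n := N)); last by lia.
have -> : G N = 0 by rewrite /G big_geq.
have -> : H N = 0 by rewrite /H big_geq.
have -> : \sum_(2 <= i < N) G i = \sum_(2 <= i < N) (H i + dist2 (A i) (A i.+1)).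
  apply: eq_big_nat => i hi; rewrite /G /H big_ltn_cond; last by lia.
  rewrite /= subSnn /= [in RHS](big_ltn (m := i.+1)); last by lia.
  rewrite subSnn expr1 filt_true; last by move=> j hj; apply/andP; split; lia.
  by rewrite mulN1r addrAC addNr add0r.
have -> : G 1%N = H 1%N + dist2 (A 1%N) (A 2%N) + dist2 (A N) (A 1%N).
  rewrite /G /H big_ltn_cond; last by lia.
  rewrite /= [in RHS](big_ltn (m := 2%N)); last by lia.
  rewrite big_mkcond (big_nat_recr N 3); last by lia.
  rewrite [in RHS](big_nat_recr N 3); last by lia.
  rewrite /=.
  have -> : ((1 < N - 1) && (N - 1 < N - 1))%N = false by lia.
  rewrite -big_mkcond filt_true; last by move=> j hj; apply/andP; split; lia.
  rewrite hodd expr1 !mulN1r !addr0 (@dist2C _ (A 1%N) (A N)).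
  ring.
rewrite big_split /=.
ring.
Qed.

Lemma vecF2 (m : nat) (A : nat -> 'rV[R]_m) (n : nat) :
  \sum_(1 <= i < (2 * n).+1) \sum_(i.+1 <= j < (2 * n).+1) (-1) ^+ (j - i) * dist2 (A i) (A j)
  = - \sum_(k < m) (\sum_(t < n) (A (2 * t).+2 0 k - A (2 * t).+1 0 k)) ^+ 2.
Proof.
rewrite vecF.
have hc : \sum_(1 <= i < (2 * n).+1) (-1) ^+ i = 0 :> R.
  rewrite (eq_bigr (fun i => (-1) ^+ i * (fun _ => (1 : R)) i)); last by move=> i _; rewrite mulr1.
  by rewrite altsum big1 // => t _; rewrite subrr.
rewrite -sumrN; apply: eq_bigr => k _.
by rewrite hc mul0r add0r (altsum (fun i => A i 0 k)).
Qed.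
End S.


Theorem corollary3p2 (R : realType) (m n : nat) (hn : (2 <= n)%N)
    (A : nat -> 'rV[R]_m) :
  (\sum_(1 <= i < 2 * n) dist2 (A i) (A i.+1) + dist2 (A (2 * n)%N) (A 1%N)
   = \sum_(1 <= i < (2 * n).+1)
       \sum_(i.+1 <= j < (2 * n).+1 | (1 < j - i)%N && (j - i < 2 * n - 1)%N)
         ((-1) ^+ (j - i) * dist2 (A i) (A j)))
  <->
  centroid n (fun k => A (2 * k).+1) = centroid n (fun k => A (2 * k).+2).
Proof.
rewrite stepA // vecF2.
set L := (\sum_(1 <= i < 2 * n) _ + _).
set S := \sum_(k < m) _.
have -> : (L = - S + L) <-> S = 0 by split => h; lra.
rewrite /centroid.
have -> : ((n%:R)^-1 *: \sum_(k < n) A (2 * k).+1 = (n%:R)^-1 *: \sum_(k < n) A (2 * k).+2)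
   <-> \sum_(k < n) A (2 * k).+1 = \sum_(k < n) A (2 * k).+2.
  split => [h|->//].
  have := congr1 (fun v => n%:R *: v) h; rewrite /= !scalerA mulfV ?scale1r //.
  by rewrite pnatr_eq0; apply/eqP; lia.
rewrite -rowP.
split.
- move=> hS k.
  have := psumr_eq0P (P := predT) (fun k _ => sqr_ge0 _) hS (i := k) isT.
  move/eqP; rewrite sqrf_eq0 sumrB subr_eq0 => /eqP h.
  by rewrite !summxE h.
- move=> h; rewrite /S big1 // => k _.
  by rewrite sumrB -!summxE h subrr expr0n.
Qed.
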